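(* Let $\Phi_1,\Phi_2:M_n(\mathbb C)\to M_n(\mathbb C)$ be linear maps which are completely positive, trace-preserving and unital. Let $X,Y\in M_n(\mathbb C)$ satisfy $\Phi_1(X)=Y$ and $\Phi_2(Y)=X$. Then $\Phi_1(XW)=Y\Phi_1(W)$ and $\Phi_1(WX)=\Phi_1(W)Y$ for all $W\in M_n(\mathbb C)$. Furthermore, $X$ and $Y$ are cospectral, and $\Phi_1^*(Y)=X$.
   Context: $\Phi^*$ denotes the adjoint of $\Phi$ with respect to the trace inner product $\langle A,B\rangle=\mathrm{tr}(A^*B)$. Unital means $\Phi(I)=I$. *)

(* Defs.v *)
(* matrices over C := R[i] for R : realType (i.e. the complex numbers). *)
From HB Require Import structures.
From mathcomp Require Import all_boot all_order all_algebra.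
From mathcomp Require Import complex reals.
Set Implicit Arguments. Unset Strict Implicit. Unset Printing Implicit Defensive.
Import Order.TTheory GRing.Theory Num.Theory.
Local Open Scope ring_scope.

Definition mxadj (C : numClosedFieldType) (m n : nat) (A : 'M[C]_(m, n)) : 'M[C]_(n, m) :=
  (map_mx Num.conj A)^T.

(* Positive semidefinite block matrix: A : 'M['M_n]_k is the k x k block matrix
   with n x n blocks A i j, viewed as an element of M_k(M_n(C)) = M_{kn}(C);
   it is PSD iff  sum_{i,j} v_i^* (A i j) v_j >= 0  for every vector
   v = (v_1,...,v_k) in (C^n)^k. *)
Definition psd_block (C : numClosedFieldType) (n k : nat) (A : 'M['M[C]_n]_k) : Prop :=
  forall v : 'I_k -> 'cV[C]_n,
    0 <= \sum_(i < k) \sum_(j < k) (mxadj (v i) *m A i j *m v j) 0 0.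

(* Completely positive: id_k (x) Phi maps PSD matrices of M_k(M_n) to PSD ones, for all k. *)
Definition completely_positive (C : numClosedFieldType) (n : nat)
    (Phi : 'M[C]_n -> 'M[C]_n) : Prop :=
  forall (k : nat) (A : 'M['M[C]_n]_k), psd_block A -> psd_block (map_mx Phi A).

Definition trace_preserving (C : numClosedFieldType) (n : nat)
    (Phi : 'M[C]_n -> 'M[C]_n) : Prop :=
  forall A, \tr (Phi A) = \tr A.

Definition unital (C : numClosedFieldType) (n : nat) (Phi : 'M[C]_n -> 'M[C]_n) : Prop :=
  Phi 1%:M = 1%:M.

(* The adjoint Phi^* w.r.t. <A,B> = tr(A^* B), written out in the standard basis:
   (Phi^* A)_{ij} = <E_ij, Phi^* A> = <Phi E_ij, A> = tr((Phi E_ij)^* A). *)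
Definition adjoint_map (C : numClosedFieldType) (n : nat)
    (Phi : 'M[C]_n -> 'M[C]_n) (A : 'M[C]_n) : 'M[C]_n :=
  \matrix_(i, j) \tr (mxadj (Phi (delta_mx i j)) *m A).

Definition cospectral (C : numClosedFieldType) (n : nat) (X Y : 'M[C]_n) : Prop :=
  char_poly X = char_poly Y.

(* Main.v *)
Require Import Defs.
From HB Require Import structures.
From mathcomp Require Import all_boot all_order all_algebra.
From mathcomp Require Import complex reals.
From mathcomp Require Import ring.
Import Order.TTheory GRing.Theory Num.Theory.
Local Open Scope ring_scope.

Lemma mxadjM (C : numClosedFieldType) m n p (A : 'M[C]_(m, n)) (B : 'M[C]_(n, p)) :
  mxadj (A *m B) = mxadj B *m mxadj A.
Proof. by rewrite /mxadj map_mxM trmx_mul. Qed.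

Lemma mxadjK (C : numClosedFieldType) m n (A : 'M[C]_(m, n)) : mxadj (mxadj A) = A.
Proof. by apply/matrixP => i j; rewrite !mxE conjCK. Qed.

Lemma mxadjD (C : numClosedFieldType) m n (A B : 'M[C]_(m, n)) :
  mxadj (A + B) = mxadj A + mxadj B.
Proof. by apply/matrixP => i j; rewrite !mxE rmorphD. Qed.

Lemma mxadjN (C : numClosedFieldType) m n (A : 'M[C]_(m, n)) :
  mxadj (- A) = - mxadj A.
Proof. by apply/matrixP => i j; rewrite !mxE rmorphN. Qed.

Lemma mxadjB (C : numClosedFieldType) m n (A B : 'M[C]_(m, n)) :
  mxadj (A - B) = mxadj A - mxadj B.
Proof. by rewrite mxadjD mxadjN. Qed.

Lemma mxadjZ (C : numClosedFieldType) m n (c : C) (A : 'M[C]_(m, n)) :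
  mxadj (c *: A) = c^* *: mxadj A.
Proof. by apply/matrixP => i j; rewrite !mxE rmorphM. Qed.

Lemma mxadj_sum (C : numClosedFieldType) m n k (F : 'I_k -> 'M[C]_(m, n)) :
  mxadj (\sum_(i < k) F i) = \sum_(i < k) mxadj (F i).
Proof.
apply/matrixP => i j; rewrite !mxE !summxE rmorph_sum; apply: eq_bigr => l _.
by rewrite !mxE.
Qed.

Lemma mxadj1 (C : numClosedFieldType) n : mxadj (1%:M : 'M[C]_n) = 1%:M.
Proof. by apply/matrixP => i j; rewrite !mxE eq_sym; case: eqP => _; rewrite ?conjC1 ?conjC0. Qed.

Lemma mxadj_entry (C : numClosedFieldType) m n (A : 'M[C]_(m, n)) i j :
  mxadj A i j = (A j i)^*.
Proof. by rewrite !mxE. Qed.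

Definition ip {C : numClosedFieldType} {n} (u v : 'cV[C]_n) : C := (mxadj u *m v) 0 0.

Lemma ipE (C : numClosedFieldType) n (u v : 'cV[C]_n) :
  ip u v = \sum_(l < n) (u l 0)^* * v l 0.
Proof. by rewrite /ip mxE; apply: eq_bigr => l _; rewrite !mxE. Qed.

Lemma ip_ge0 (C : numClosedFieldType) n (u : 'cV[C]_n) : 0 <= ip u u.
Proof.
rewrite ipE; apply: sumr_ge0 => l _; rewrite mulrC; exact: mul_conjC_ge0.
Qed.

Lemma ip_conj (C : numClosedFieldType) n (u v : 'cV[C]_n) : ip v u = (ip u v)^*.
Proof.
by rewrite !ipE rmorph_sum; apply: eq_bigr => l _; rewrite rmorphM /= conjCK mulrC.

Qed.

Lemma ipDl (C : numClosedFieldType) n (u w v : 'cV[C]_n) : ip (u + w) v = ip u v + ip w v.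
Proof. by rewrite /ip mxadjD mulmxDl mxE. Qed.
Lemma ipDr (C : numClosedFieldType) n (u w v : 'cV[C]_n) : ip v (u + w) = ip v u + ip v w.
Proof. by rewrite /ip mulmxDr mxE. Qed.
Lemma ipNl (C : numClosedFieldType) n (u v : 'cV[C]_n) : ip (- u) v = - ip u v.
Proof. by rewrite /ip mxadjN mulNmx mxE. Qed.
Lemma ipNr (C : numClosedFieldType) n (u v : 'cV[C]_n) : ip v (- u) = - ip v u.
Proof. by rewrite /ip mulmxN mxE. Qed.
Lemma ipBl (C : numClosedFieldType) n (u w v : 'cV[C]_n) : ip (u - w) v = ip u v - ip w v.
Proof. by rewrite ipDl ipNl. Qed.
Lemma ipBr (C : numClosedFieldType) n (u w v : 'cV[C]_n) : ip v (u - w) = ip v u - ip v w.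
Proof. by rewrite ipDr ipNr. Qed.
Lemma ipZl (C : numClosedFieldType) n c (u v : 'cV[C]_n) : ip (c *: u) v = c^* * ip u v.
Proof. by rewrite /ip mxadjZ -scalemxAl mxE. Qed.
Lemma ipZr (C : numClosedFieldType) n c (u v : 'cV[C]_n) : ip v (c *: u) = c * ip v u.
Proof. by rewrite /ip -scalemxAr mxE. Qed.
Lemma ip0l (C : numClosedFieldType) n (v : 'cV[C]_n) : ip 0 v = 0.
Proof. by rewrite /ip (_ : mxadj 0 = 0) ?mul0mx ?mxE //; apply/matrixP=> i j; rewrite !mxE conjC0. Qed.
Lemma ip0r (C : numClosedFieldType) n (v : 'cV[C]_n) : ip v 0 = 0.
Proof. by rewrite /ip mulmx0 mxE. Qed.

Lemma ip_adj (C : numClosedFieldType) n (B : 'M[C]_n) (u v : 'cV[C]_n) :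
  ip u (mxadj B *m v) = ip (B *m u) v.
Proof. by rewrite /ip mxadjM mulmxA. Qed.

Definition ev {C : numClosedFieldType} {n} (p : 'I_n) : 'cV[C]_n := delta_mx p 0.

Lemma ip_ev (C : numClosedFieldType) n (M : 'M[C]_n) p q :
  ip (ev p) (M *m ev q) = M p q :> C.
Proof.
rewrite /ev -colE ipE (bigD1 p) //= big1 ?addr0 => [|l /negbTE nlp].
  by rewrite !mxE !eqxx /= conjC1 mul1r.
by rewrite !mxE nlp /= conjC0 mul0r.
Qed.

Lemma gram_psd (C : numClosedFieldType) n k (A : 'I_k -> 'M[C]_n) :
  psd_block (\matrix_(i, j) (mxadj (A i) *m A j)).
Proof.
move=> v; pose w := \sum_(i < k) A i *m v i.
have -> : \sum_(i < k) \sum_(j < k) (mxadj (v i) *m (\matrix_(i, j) (mxadj (A i) *m A j)) i j *m v j) 0 0 = ip w w.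
  rewrite /ip /w mxadj_sum mulmx_suml summxE; apply: eq_bigr => i _.
  rewrite mulmx_sumr summxE; apply: eq_bigr => j _; rewrite mxE mxadjM !mulmxA.
  done.
exact: ip_ge0.
Qed.

Lemma cp_gram (C : numClosedFieldType) n (Phi : 'M[C]_n -> 'M[C]_n) k
    (A : 'I_k -> 'M[C]_n) (v : 'I_k -> 'cV[C]_n) :
  completely_positive Phi ->
  0 <= \sum_(i < k) \sum_(j < k) ip (v i) (Phi (mxadj (A i) *m A j) *m v j).
Proof.
move=> HCP; have := HCP k _ (@gram_psd C n k A) v.
congr (_ <= _); apply: eq_bigr => i _; apply: eq_bigr => j _.
have -> : map_mx Phi (\matrix_(i0, j0) (mxadj (A i0) *m A j0)) i j = Phi (mxadj (A i) *m A j) by rewrite !mxE.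
by rewrite /ip mulmxA.
Qed.

Lemma cp2 (C : numClosedFieldType) n (Phi : 'M[C]_n -> 'M[C]_n) (a0 a1 : 'M[C]_n) (v0 v1 : 'cV[C]_n) :
  completely_positive Phi ->
  0 <= ip v0 (Phi (mxadj a0 *m a0) *m v0) + ip v0 (Phi (mxadj a0 *m a1) *m v1)
     + ip v1 (Phi (mxadj a1 *m a0) *m v0) + ip v1 (Phi (mxadj a1 *m a1) *m v1).
Proof.
move=> HCP.
have := @cp_gram C n Phi 2 (fun i : 'I_2 => if (i : nat) == 0%N then a0 else a1)
                (fun i : 'I_2 => if (i : nat) == 0%N then v0 else v1) HCP.
by rewrite !big_ord_recl !big_ord0 /= !addr0 !addrA.
Qed.

Lemma cp3 (C : numClosedFieldType) n (Phi : 'M[C]_n -> 'M[C]_n) (a0 a1 a2 : 'M[C]_n) (v0 v1 v2 : 'cV[C]_n) :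
  completely_positive Phi ->
  0 <= ip v0 (Phi (mxadj a0 *m a0) *m v0) + ip v0 (Phi (mxadj a0 *m a1) *m v1)
     + ip v0 (Phi (mxadj a0 *m a2) *m v2)
     + ip v1 (Phi (mxadj a1 *m a0) *m v0) + ip v1 (Phi (mxadj a1 *m a1) *m v1)
     + ip v1 (Phi (mxadj a1 *m a2) *m v2)
     + ip v2 (Phi (mxadj a2 *m a0) *m v0) + ip v2 (Phi (mxadj a2 *m a1) *m v1)
     + ip v2 (Phi (mxadj a2 *m a2) *m v2).
Proof.
move=> HCP.
have := @cp_gram C n Phi 3 (fun i : 'I_3 => if (i : nat) == 0%N then a0 else if (i : nat) == 1%N then a1 else a2)
                (fun i : 'I_3 => if (i : nat) == 0%N then v0 else if (i : nat) == 1%N then v1 else v2) HCP.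
by rewrite !big_ord_recl !big_ord0 /= !addr0 !addrA.
Qed.

Lemma polar (C : numClosedFieldType) (c0 c2 a b : C) :
  c0 \is Num.real -> c2 \is Num.real ->
  (forall s : C, 0 <= c0 + s * a + s^* * b + s^* * (s * c2)) -> b = a^*.
Proof.
move=> r0 r2 H.
have h1 := H 1; have h2 := H 'i.
rewrite conjC1 !mul1r in h1; rewrite conjCi in h2.
have e1 := conj_Creal (ger0_real h1).
have e2 := conj_Creal (ger0_real h2).
rewrite !rmorphD /= !rmorphM /= !rmorphN /= conjCi (conj_Creal r0) (conj_Creal r2) in e1 e2.
have key : (b - a^*) * 2 = 
  ((c0 + a + b + c2) - (c0 + a^* + b^* + c2))
  + 'i * ((c0 + 'i * a + - 'i * b + - 'i * ('i * c2)) - (c0 + - 'i * a^* + - - 'i * b^* + - - 'i * (- 'i * c2)))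
  - ('i ^+ 2 + 1) * (a - b + a^* - b^*) by ring.
move: key; rewrite -e1 -e2 sqrCi !subrr mulr0 addNr mul0r !addr0 subr0.
move/eqP; rewrite mulf_eq0 pnatr_eq0 orbF subr_eq0 => /eqP //.
Qed.

Lemma zf (C : numClosedFieldType) (c2 a : C) :
  0 <= c2 ->
  (forall s : C, 0 <= s * a + s^* * a^* + s^* * (s * c2)) -> a = 0.
Proof.
move=> c2ge0 H.
have r2 : c2 \is Num.real by exact: ger0_real.
set d := c2 + 1.
have dgt0 : 0 < d by rewrite /d ltr_wpDl.
have dr : d^* = d by rewrite conj_Creal // ger0_real // ltW.
have dn0 : d != 0 by rewrite gt_eqF.
have := H (- a^* / d).
rewrite rmorphM /= rmorphN /= conjCK fmorphV /= dr.
have -> : - a^* / d * a + - a / d * a^* + - a / d * (- a^* / d * c2)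
   = - (a * a^* * ((c2 + 2) / d ^+ 2)).
  rewrite /d; field.
  by rewrite -/d.
rewrite oppr_ge0 => hle.
have hge : 0 <= a * a^* * ((c2 + 2) / d ^+ 2).
  apply: mulr_ge0; first exact: mul_conjC_ge0.
  apply: divr_ge0; last exact: exprn_ge0 (ltW dgt0).
  by apply: addr_ge0.
have : a * a^* * ((c2 + 2) / d ^+ 2) = 0 by apply/eqP; rewrite eq_le hle hge.
move/eqP; rewrite mulf_eq0 mul_conjC_eq0 => /orP [/eqP //|].
rewrite mulf_eq0 invr_eq0 expf_eq0 (negbTE dn0) andbF orbF.
by rewrite gt_eqF // ltr_wpDl.
Qed.

Lemma cp_diag_ge0 (C : numClosedFieldType) n (Phi : 'M[C]_n -> 'M[C]_n) (A : 'M[C]_n) v :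
  completely_positive Phi -> 0 <= ip v (Phi (mxadj A *m A) *m v).
Proof.
move=> HCP; have := @cp2 C n Phi A A 0 v HCP.
by rewrite !ip0l !mulmx0 !ip0r !add0r.
Qed.

Lemma herm (C : numClosedFieldType) n (Phi : 'M[C]_n -> 'M[C]_n) :
  completely_positive Phi -> unital Phi ->
  forall A, Phi (mxadj A) = mxadj (Phi A).
Proof.
move=> HCP HU A; apply/matrixP => q p; rewrite mxadj_entry.
apply: (@polar C 1 (ip (ev q) (Phi (mxadj A *m A) *m ev q))).
- exact: real1.
- exact: (ger0_real (@cp_diag_ge0 C n Phi A (ev q) HCP)).
move=> s; have := @cp2 C n Phi 1%:M A (ev p) (s *: ev q) HCP.
rewrite mxadj1 !mul1mx mulmx1 HU ip_ev mxE eqxx /=.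
by rewrite -!scalemxAr !ipZr !ipZl !ip_ev mulrCA.
Qed.

Definition Dm {C : numClosedFieldType} {n} (Phi : 'M[C]_n -> 'M[C]_n) (a b : 'M[C]_n) :=
  Phi (mxadj a *m b) - mxadj (Phi a) *m Phi b.

Lemma schur (C : numClosedFieldType) n (Phi : 'M[C]_n -> 'M[C]_n) :
  completely_positive Phi -> unital Phi ->
  forall (a w : 'M[C]_n) (x y : 'cV[C]_n),
  0 <= ip x (Dm Phi a a *m x) + ip x (Dm Phi a w *m y)
     + ip y (Dm Phi w a *m x) + ip y (Dm Phi w w *m y).
Proof.
move=> HCP HU a w x y.
have := @cp3 C n Phi a w 1%:M x y (-(Phi a *m x + Phi w *m y)) HCP.
rewrite mxadj1 !mulmx1 !mul1mx HU mul1mx (@herm C n Phi HCP HU a) (@herm C n Phi HCP HU w).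
rewrite !ip_adj !ipNr !ipNl !ipDr !ipDl.
rewrite /Dm !mulmxBl !ipBr -!mulmxA !ip_adj.
move=> H; apply: (le_trans H); rewrite le_eqVlt; apply/orP; left; apply/eqP; ring.
Qed.

Lemma Dm_adj (C : numClosedFieldType) n (Phi : 'M[C]_n -> 'M[C]_n) :
  completely_positive Phi -> unital Phi ->
  forall a w, Dm Phi w a = mxadj (Dm Phi a w).
Proof.
move=> HCP HU a w; rewrite /Dm mxadjB !mxadjM mxadjK.
by rewrite -!(@herm C n Phi HCP HU) mxadjM mxadjK.
Qed.

Lemma md (C : numClosedFieldType) n (Phi : 'M[C]_n -> 'M[C]_n) :
  completely_positive Phi -> unital Phi ->
  forall a, (forall p, Dm Phi a a p p = 0) -> forall w, Dm Phi a w = 0.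
Proof.
move=> HCP HU a Ha w; apply/matrixP => p q; rewrite [RHS]mxE.
apply: (@zf C (Dm Phi w w q q)).
  have := @schur C n Phi HCP HU a w 0 (ev q).
  by rewrite !ip0l !mulmx0 !ip0r !add0r ip_ev.
move=> s; have := @schur C n Phi HCP HU a w (ev p) (s *: ev q).
rewrite -!scalemxAr !ipZr !ipZl !ip_ev Ha add0r.
by rewrite (@Dm_adj C n Phi HCP HU a w) mxadj_entry mulrCA.
Qed.

Lemma Dm_diag_ge0 (C : numClosedFieldType) n (Phi : 'M[C]_n -> 'M[C]_n) :
  completely_positive Phi -> unital Phi ->
  forall a p, 0 <= Dm Phi a a p p.
Proof.
move=> HCP HU a p; have := @schur C n Phi HCP HU a a (ev p) 0.
by rewrite !ip0l !mulmx0 !ip0r !addr0 ip_ev.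
Qed.

Lemma tr_Dm (C : numClosedFieldType) n (Phi : {linear 'M[C]_n -> 'M[C]_n}) a :
  trace_preserving Phi ->
  \tr (Dm Phi a a) = \tr (mxadj a *m a) - \tr (mxadj (Phi a) *m Phi a).
Proof. by move=> TP; rewrite /Dm linearB /= TP. Qed.

Lemma kseq (C : numClosedFieldType) n (Phi Psi : {linear 'M[C]_n -> 'M[C]_n}) a b :
  completely_positive Phi -> trace_preserving Phi -> unital Phi ->
  completely_positive Psi -> trace_preserving Psi -> unital Psi ->
  Phi a = b -> Psi b = a -> Dm Phi a a = 0.
Proof.
move=> CP1 TP1 U1 CP2 TP2 U2 eab eba.
apply: (@md C n Phi CP1 U1 a) => p.
have h1 := @tr_Dm C n Phi a TP1; have h2 := @tr_Dm C n Psi b TP2.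
rewrite eab in h1; rewrite eba in h2.
have g1 : 0 <= \tr (Dm Phi a a).
  by rewrite /mxtrace; apply: sumr_ge0 => i _; apply: Dm_diag_ge0.
have g2 : 0 <= \tr (Dm Psi b b).
  by rewrite /mxtrace; apply: sumr_ge0 => i _; apply: Dm_diag_ge0.
have t0 : \tr (Dm Phi a a) = 0.
  apply/eqP; rewrite eq_le g1 andbT.
  have -> : \tr (Dm Phi a a) = - \tr (Dm Psi b b) by rewrite h1 h2 opprB.
  by rewrite oppr_le0.
move: t0; rewrite /mxtrace => t0.
by apply: (psumr_eq0P _ t0) => // i _; apply: Dm_diag_ge0.
Qed.

Lemma md_mult (C : numClosedFieldType) n (Phi : 'M[C]_n -> 'M[C]_n) :
  completely_positive Phi -> unital Phi ->
  forall a, Dm Phi a a = 0 -> forall w, Phi (mxadj a *m w) = mxadj (Phi a) *m Phi w.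
Proof.
move=> HCP HU a Ha w.
have := @md C n Phi HCP HU a (fun p => ltac:(by rewrite Ha mxE)) w.
by move/eqP; rewrite subr_eq0 => /eqP.
Qed.

Lemma tr_adj (C : numClosedFieldType) n (A : 'M[C]_n) : \tr (mxadj A) = (\tr A)^*.
Proof. by rewrite /mxtrace rmorph_sum; apply: eq_bigr => i _; rewrite !mxE. Qed.

Lemma tr_delta (C : numClosedFieldType) n (X : 'M[C]_n) i j :
  \tr (delta_mx j i *m X) = X i j.
Proof.
rewrite /mxtrace (bigD1 j) //= big1 ?addr0.
  rewrite mxE (bigD1 i) //= big1 ?addr0 ?mxE ?eqxx ?mul1r //.
  by move=> l /negbTE nli; rewrite mxE nli andbF mul0r.
by move=> p /negbTE npj; rewrite mxE big1 // => l _; rewrite mxE npj mul0r.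
Qed.

Lemma mxadj_delta (C : numClosedFieldType) n (i j : 'I_n) :
  mxadj (delta_mx i j : 'M[C]_n) = delta_mx j i.
Proof.
apply/matrixP => p q; rewrite !mxE.
by case: (p == j); case: (q == i); rewrite /= ?conjC1 ?conjC0.
Qed.

Lemma main_generic (C : numClosedFieldType) (n : nat)
    (Phi1 Phi2 : {linear 'M[C]_n -> 'M[C]_n}) (X Y : 'M[C]_n) :
  completely_positive Phi1 -> trace_preserving Phi1 -> unital Phi1 ->
  completely_positive Phi2 -> trace_preserving Phi2 -> unital Phi2 ->
  Phi1 X = Y -> Phi2 Y = X ->
  (forall W : 'M[C]_n, Phi1 (X *m W) = Y *m Phi1 W) /\
  (forall W : 'M[C]_n, Phi1 (W *m X) = Phi1 W *m Y) /\
  adjoint_map Phi1 Y = X.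
Proof.
move=> CP1 TP1 U1 CP2 TP2 U2 eXY eYX.
have h1 : Dm Phi1 X X = 0 by exact: (@kseq C n Phi1 Phi2 X Y).
have eXY' : Phi1 (mxadj X) = mxadj Y by rewrite (@herm C n Phi1 CP1 U1) eXY.
have eYX' : Phi2 (mxadj Y) = mxadj X by rewrite (@herm C n Phi2 CP2 U2) eYX.
have h2 : Dm Phi1 (mxadj X) (mxadj X) = 0 by exact: (@kseq C n Phi1 Phi2 _ _ CP1 TP1 U1 CP2 TP2 U2 eXY' eYX').
have L : forall W, Phi1 (X *m W) = Y *m Phi1 W.
  move=> W; have := @md_mult C n Phi1 CP1 U1 _ h2 W.
  by rewrite mxadjK eXY' mxadjK.
have L' : forall W, Phi1 (mxadj X *m W) = mxadj Y *m Phi1 W.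
  by move=> W; rewrite (@md_mult C n Phi1 CP1 U1 _ h1 W) eXY.
split=> //; split.
  move=> W; rewrite -[Phi1 (W *m X)]mxadjK -(@herm C n Phi1 CP1 U1) mxadjM L'.
  by rewrite mxadjM mxadjK (@herm C n Phi1 CP1 U1) mxadjK.
apply/matrixP => i j; rewrite mxE.
rewrite -[mxadj _ *m Y]mxadjK mxadjM mxadjK tr_adj.
rewrite -L' TP1 -tr_adj mxadjM mxadjK mxadj_delta.
exact: tr_delta.
Qed.

Definition lagr {C : fieldType} (S : seq C) (l : C) : {poly C} :=
  \prod_(mu <- S | mu != l) (('X - mu%:P) * ((l - mu)^-1)%:P).

Lemma lagrE (C : fieldType) (S : seq C) l x : x \in S ->
  (lagr S l).[x] = (x == l)%:R.
Proof.
move=> xS; rewrite /lagr horner_prod.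
have [->|nxl] := eqVneq x l.
  rewrite big1_seq // => mu /andP [nml _].
  by rewrite hornerM hornerXsubC hornerC mulfV // subr_eq0 eq_sym.
apply/eqP; rewrite /= prodf_seq_eq0; apply/hasP; exists x => //.
by rewrite nxl /= hornerM hornerXsubC hornerC subrr mul0r.
Qed.

Lemma count_sum (C : numDomainType) m (d : 'I_m -> C) l :
  (count_mem l [seq d i | i <- index_enum 'I_m])%:R = \sum_(i < m) ((d i == l)%:R : C).
Proof.
rewrite -sum1_count big_map natr_sum big_mkcond /=; apply: eq_bigr => i _.
by case: (d i == l).
Qed.

Lemma count_prod (C : numClosedFieldType) m (d e : 'I_m -> C) :
  (forall p : {poly C}, \sum_(i < m) p.[d i] = \sum_(i < m) p.[e i]) ->
  \prod_(i < m) ('X - (d i)%:P) = \prod_(i < m) ('X - (e i)%:P).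
Proof.
move=> H.
pose sd := [seq d i | i <- index_enum 'I_m].
pose se := [seq e i | i <- index_enum 'I_m].
pose S := undup (sd ++ se).
have inS1 : forall i, d i \in S.
  by move=> i; rewrite mem_undup mem_cat map_f ?mem_index_enum.
have inS2 : forall i, e i \in S.
  by move=> i; rewrite mem_undup mem_cat orbC map_f ?mem_index_enum.
have pe : perm_eq sd se.
  apply/allP => l _; apply/eqP; apply/eqP.
  rewrite -(eqr_nat C) !count_sum; apply/eqP.
  have := H (lagr S l).
  rewrite (eq_bigr _ (fun i _ => @lagrE C S l _ (inS1 i))).
  by rewrite (eq_bigr _ (fun i _ => @lagrE C S l _ (inS2 i))).
have E1 : \prod_(i < m) ('X - (d i)%:P) = \prod_(x <- sd) ('X - x%:P) by rewrite big_map.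
have E2 : \prod_(i < m) ('X - (e i)%:P) = \prod_(x <- se) ('X - x%:P) by rewrite big_map.
by rewrite E1 E2; apply: perm_big.
Qed.

Lemma trig_mulmx (R : comNzRingType) n (A B : 'M[R]_n) :
  is_trig_mx A -> is_trig_mx B -> is_trig_mx (A *m B).
Proof.
move=> /is_trig_mxP tA /is_trig_mxP tB; apply/is_trig_mxP => i j lij.
rewrite mxE big1 // => k _.
case: (ltnP i k) => [ik|ki]; first by rewrite tA ?mul0r.
by rewrite tB ?mulr0 // (leq_ltn_trans ki lij).
Qed.

Lemma diag_mulmx (R : comNzRingType) n (A B : 'M[R]_n) i :
  is_trig_mx A -> is_trig_mx B -> (A *m B) i i = A i i * B i i.
Proof.
move=> /is_trig_mxP tA /is_trig_mxP tB.
rewrite mxE (bigD1 i) //= big1 ?addr0 // => k nki.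
case: (ltnP i k) => [ik|ki]; first by rewrite tA ?mul0r.
rewrite tB ?mulr0 // ltn_neqAle ki andbT.
by apply: contra nki => /eqP ki'; apply/eqP/val_inj.
Qed.

Lemma trig_add (R : comNzRingType) n (A B : 'M[R]_n) :
  is_trig_mx A -> is_trig_mx B -> is_trig_mx (A + B).
Proof.
move=> /is_trig_mxP tA /is_trig_mxP tB; apply/is_trig_mxP => i j lij.
by rewrite mxE tA // tB // addr0.
Qed.

Lemma horner_trig (R : comNzRingType) n (T : 'M[R]_n.+1) (p : {poly R}) :
  is_trig_mx T -> is_trig_mx (horner_mx T p) /\
  forall i, horner_mx T p i i = p.[T i i].
Proof.
move=> tT; elim/poly_ind: p => [|p c [IH1 IH2]].
  by rewrite rmorph0; split; [exact: mx0_is_trig | move=> i; rewrite mxE horner0].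
rewrite rmorphD rmorphM /= horner_mx_X horner_mx_C; split.
  by apply: trig_add; [apply: trig_mulmx | apply: scalar_mx_is_trig].
move=> i; rewrite mxE -mulmxE diag_mulmx // IH2 hornerMXaddC mxE eqxx.
done.
Qed.

Lemma charpoly_conj (C : fieldType) n (P A : 'M[C]_n) : P \in unitmx ->
  char_poly (P *m A *m invmx P) = char_poly A.
Proof.
move=> Pu; rewrite /char_poly /char_poly_mx.
set mP := map_mx polyC P; set mQ := map_mx polyC (invmx P).
have PQ : mP *m mQ = 1%:M by rewrite -map_mxM mulmxV // map_mx1.
have -> : 'X%:M - map_mx polyC (P *m A *m invmx P) = mP *m ('X%:M - map_mx polyC A) *m mQ.
  rewrite !map_mxM mulmxBr mulmxBl -/mP -/mQ; congr (_ - _).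
  by rewrite mul_mx_scalar -scalemxAl PQ scalemx1.
by rewrite !det_mulmx mulrAC -det_mulmx PQ det1 mul1r.
Qed.

Lemma spectrum (C : numClosedFieldType) n (A : 'M[C]_n.+1) :
  exists d : 'I_n.+1 -> C, char_poly A = \prod_(i < n.+1) ('X - (d i)%:P) /\
    forall p, \tr (horner_mx A p) = \sum_(i < n.+1) p.[d i].
Proof.
have [P Pu tT] := @Schur C n.+1 A isT.
have Pun := unitarymx_unit Pu.
move: tT; rewrite /similar_to /= conjumx // => tT.
set T := P *m A *m invmx P in tT.
exists (fun i => T i i); split.
  by rewrite -(@charpoly_conj C n.+1 P A Pun) char_poly_trig.
move=> p; have [_ H2] := @horner_trig C n T p tT.
have -> : \sum_(i < n.+1) p.[T i i] = \tr (horner_mx T p).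
  by rewrite /mxtrace; apply: eq_bigr => i _; rewrite H2.
by rewrite /T horner_mx_uconj // mxtrace_mulC mulmxA mulVmx // mul1mx.
Qed.

Lemma cospec_gen (C : numClosedFieldType) n (Phi : {linear 'M[C]_n -> 'M[C]_n}) (X Y : 'M[C]_n) :
  trace_preserving Phi -> unital Phi ->
  (forall W, Phi (X *m W) = Y *m Phi W) -> char_poly X = char_poly Y.
Proof.
case: n Phi X Y => [|n] Phi X Y TP U L.
  by have -> : X = Y by apply/matrixP => [[]].
have hp : forall p, Phi (horner_mx X p) = horner_mx Y p.
  elim/poly_ind => [|p c IH]; first by rewrite !rmorph0 linear0.
  rewrite mulrC !rmorphD !rmorphM /= !horner_mx_X !horner_mx_C.
  rewrite linearD /= -mulmxE L IH.
  by rewrite -scalemx1 linearZ /= U.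
have ht : forall p, \tr (horner_mx X p) = \tr (horner_mx Y p) by move=> p; rewrite -hp TP.
have [d [Ed Td]] := @spectrum C n X.
have [e [Ee Te]] := @spectrum C n Y.
rewrite Ed Ee; apply: count_prod => p.
by rewrite -Td -Te ht.
Qed.

Theorem lemmaA2 (R : realType) (n : nat)
    (Phi1 Phi2 : {linear 'M[R[i]]_n -> 'M[R[i]]_n})
    (X Y : 'M[R[i]]_n) :
  completely_positive Phi1 -> trace_preserving Phi1 -> unital Phi1 ->
  completely_positive Phi2 -> trace_preserving Phi2 -> unital Phi2 ->
  Phi1 X = Y -> Phi2 Y = X ->
  (forall W : 'M[R[i]]_n, Phi1 (X *m W) = Y *m Phi1 W) /\
  (forall W : 'M[R[i]]_n, Phi1 (W *m X) = Phi1 W *m Y) /\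
  cospectral X Y /\
  adjoint_map Phi1 Y = X.
Proof.
move=> CP1 TP1 U1 CP2 TP2 U2 eXY eYX.
have [L [Rm A]] := @main_generic _ n Phi1 Phi2 X Y CP1 TP1 U1 CP2 TP2 U2 eXY eYX.
split => //; split => //; split => //.
exact: (@cospec_gen _ n Phi1 X Y TP1 U1 L).
Qed.
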